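(* Let $G$ be a 5-vertex-critical $(P_5,\text{chair})$-free graph and let $C=v_1v_2v_3v_4v_5v_1$ be an induced $C_5$ in $G$. Then for every $1\le i\le 5$, every vertex of $V(G)\setminus(S^2_3(i)\cup S_4(i)\cup S_5)$ is either complete or anticomplete to $S^2_3(i)$.
   Context: All graphs are finite and simple; $P_5$ is the path on 5 vertices; the chair is a $P_4$ plus a vertex adjacent to exactly one of the two middle vertices of the $P_4$; ''$H$-free'' means no induced subgraph isomorphic to $H$; $G$ is $k$-vertex-critical if $\chi(G)=k$ and $\chi(G-v)<k$ for all $v$. Indices modulo 5; for $v\notin V(C)$ let $N_C(v)=N(v)\cap V(C)$. $S^2_3(i)=\{v\notin V(C): N_C(v)=\{v_{i-2},v_i,v_{i+2}\}\}$, $S_4(i)=\{v\notin V(C): N_C(v)=\{v_{i-2},v_{i-1},v_{i+1},v_{i+2}\}\}$, $S_5=\{v\notin V(C): N_C(v)=V(C)\}$. Complete/anticomplete: adjacent/nonadjacent to every vertex of the set. *)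

(* Defs.v *)
From mathcomp Require Import all_boot all_order.
Set Implicit Arguments. Unset Strict Implicit. Unset Printing Implicit Defensive.

Section Graphs.
Variable T : finType.
Variable e : rel T.

Definition simple_graph : Prop := symmetric e /\ irreflexive e.

Definition colorable_on (S : {set T}) (k : nat) : Prop :=
  exists c : T -> nat,
    (forall x, x \in S -> c x < k) /\
    (forall x y, x \in S -> y \in S -> e x y -> c x != c y).

Definition chromatic_number_is (S : {set T}) (k : nat) : Prop :=
  colorable_on S k /\ forall j, j < k -> ~ colorable_on S j.

Definition vertex_critical (k : nat) : Prop :=
  chromatic_number_is [set: T] k /\
  forall v : T, exists2 j, j < k & chromatic_number_is (setT :\ v) j.

Definition induced_copy (H : finType) (h : rel H) : Prop :=
  exists f : H -> T, injective f /\ forall a b, h a b = e (f a) (f b).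

Definition H_free (H : finType) (h : rel H) : Prop := ~ induced_copy h.
End Graphs.

Definition P5 : rel 'I_5 := fun i j => (i.+1 == j :> nat) || (j.+1 == i :> nat).

(* chair on 'I_5 : path 0-1-2-3 plus vertex 4 adjacent to 1 only *)
Definition chair : rel 'I_5 := fun i j =>
  [|| (i.+1 == j :> nat) && (j <= 3), (j.+1 == i :> nat) && (i <= 3),
      (i == 4 :> nat) && (j == 1 :> nat) | (i == 1 :> nat) && (j == 4 :> nat)].

Definition shift (i : 'I_5) (k : nat) : nat := (i + k) %% 5.

Section C5.
Variable T : finType.
Variable e : rel T.
Variable v : 'I_5 -> T.

Definition induced_C5 : Prop :=
  injective v /\
  forall i j : 'I_5, e (v i) (v j) = (j == shift i 1 :> nat) || (i == shift j 1 :> nat).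

Definition inC (x : T) : bool := [exists j, v j == x].

Definition NC_is (x : T) (P : 'I_5 -> bool) : bool :=
  ~~ inC x && [forall j, e x (v j) == P j].

(* S^2_3(i): N_C(x) = {v_{i-2}, v_i, v_{i+2}} *)
Definition S23 (i : 'I_5) (x : T) : bool :=
  NC_is x (fun j => [|| j == shift i 3 :> nat, j == i :> nat | j == shift i 2 :> nat]).

(* S_4(i): N_C(x) = {v_{i-2}, v_{i-1}, v_{i+1}, v_{i+2}} *)
Definition S4 (i : 'I_5) (x : T) : bool :=
  NC_is x (fun j => [|| j == shift i 3 :> nat, j == shift i 4 :> nat,
                        j == shift i 1 :> nat | j == shift i 2 :> nat]).

Definition S5 (x : T) : bool := NC_is x (fun _ => true).
End C5.

(* Main.v *)
Require Import Defs.
From mathcomp Require Import all_boot all_order.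
Set Implicit Arguments. Unset Strict Implicit. Unset Printing Implicit Defensive.

Definition cycn (a c : nat) := (a < 5) && (c < 5) && ((c == (a+1)%%5) || (a == (c+1)%%5)).
Definition nyn (a : nat) := a \in [:: 0; 2; 3].
Definition Mn (b : seq bool) (yy : bool) (a c : nat) : bool :=
 if a < 5 then (if c < 5 then cycn a c else if c == 5 then nyn a
                else if c == 6 then nyn a else if c == 7 then nth false b a else false)
 else if a == 5 then (if c < 5 then nyn c else if c == 6 then yy else c == 7)
 else if a == 6 then (if c < 5 then nyn c else if c == 5 then yy else false)
 else if a == 7 then (if c < 5 then nth false b c else c == 5)
 else false.

Definition P5n (i j : nat) := (i.+1 == j) || (j.+1 == i).
Definition chairn (i j : nat) := [|| (i.+1 == j) && (j <= 3), (j.+1 == i) && (i <= 3),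
      (i == 4) && (j == 1) | (i == 1) && (j == 4)].
Definition good (h : nat -> nat -> bool) (M : nat -> nat -> bool) (s : seq nat) :=
  (size s == 5) && uniq s && all (fun k => k < 8) s &&
  all (fun p => all (fun q => h p q == M (nth 0 s p) (nth 0 s q)) (iota 0 5)) (iota 0 5).

Definition excl (b : seq bool) :=
  (b == [:: true; false; true; true; false]) || (b == [:: false; true; true; true; true])
  || (b == [:: true; true; true; true; true]).

Lemma table b0 b1 b2 b3 b4 yy :
  ~~ excl [:: b0; b1; b2; b3; b4] ->
  exists s, good P5n (Mn [:: b0; b1; b2; b3; b4] yy) s || good chairn (Mn [:: b0; b1; b2; b3; b4] yy) s.
Proof.
case: b0; case: b1; case: b2; case: b3; case: b4; case: yy.
  - by [].
  - by [].
  - by move=> _; exists [:: 4; 3; 7; 1; 6]; vm_compute.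
  - by move=> _; exists [:: 4; 3; 7; 1; 6]; vm_compute.
  - by move=> _; exists [:: 1; 7; 4; 3; 6]; vm_compute.
  - by move=> _; exists [:: 1; 7; 4; 3; 6]; vm_compute.
  - by move=> _; exists [:: 1; 7; 5; 3; 4]; vm_compute.
  - by move=> _; exists [:: 1; 7; 5; 3; 4]; vm_compute.
  - by move=> _; exists [:: 4; 7; 1; 2; 6]; vm_compute.
  - by move=> _; exists [:: 4; 7; 1; 2; 6]; vm_compute.
  - by move=> _; exists [:: 4; 0; 6; 2; 7]; vm_compute.
  - by move=> _; exists [:: 4; 0; 6; 2; 7]; vm_compute.
  - by move=> _; exists [:: 1; 7; 4; 3; 6]; vm_compute.
  - by move=> _; exists [:: 1; 7; 4; 3; 6]; vm_compute.
  - by move=> _; exists [:: 1; 7; 5; 3; 4]; vm_compute.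
  - by move=> _; exists [:: 1; 7; 5; 3; 4]; vm_compute.
  - by move=> _; exists [:: 1; 2; 7; 4; 6]; vm_compute.
  - by move=> _; exists [:: 1; 2; 7; 4; 6]; vm_compute.
  - by [].
  - by [].
  - by move=> _; exists [:: 1; 0; 6; 3; 7]; vm_compute.
  - by move=> _; exists [:: 1; 0; 6; 3; 7]; vm_compute.
  - by move=> _; exists [:: 1; 0; 4; 3; 7]; vm_compute.
  - by move=> _; exists [:: 1; 0; 4; 3; 7]; vm_compute.
  - by move=> _; exists [:: 1; 2; 5; 7; 4]; vm_compute.
  - by move=> _; exists [:: 1; 2; 5; 7; 4]; vm_compute.
  - by move=> _; exists [:: 4; 0; 1; 2; 7]; vm_compute.
  - by move=> _; exists [:: 1; 2; 5; 7; 6]; vm_compute.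
  - by move=> _; exists [:: 1; 2; 3; 4; 7]; vm_compute.
  - by move=> _; exists [:: 1; 2; 3; 4; 7]; vm_compute.
  - by move=> _; exists [:: 2; 3; 4; 0; 7]; vm_compute.
  - by move=> _; exists [:: 2; 3; 4; 0; 7]; vm_compute.
  - by [].
  - by [].
  - by move=> _; exists [:: 4; 0; 6; 2; 7]; vm_compute.
  - by move=> _; exists [:: 4; 0; 6; 2; 7]; vm_compute.
  - by move=> _; exists [:: 1; 7; 4; 3; 6]; vm_compute.
  - by move=> _; exists [:: 1; 7; 4; 3; 6]; vm_compute.
  - by move=> _; exists [:: 0; 4; 3; 2; 7]; vm_compute.
  - by move=> _; exists [:: 0; 4; 3; 2; 7]; vm_compute.
  - by move=> _; exists [:: 2; 6; 0; 4; 7]; vm_compute.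
  - by move=> _; exists [:: 2; 6; 0; 4; 7]; vm_compute.
  - by move=> _; exists [:: 2; 1; 0; 4; 7]; vm_compute.
  - by move=> _; exists [:: 2; 1; 0; 4; 7]; vm_compute.
  - by move=> _; exists [:: 1; 7; 4; 3; 6]; vm_compute.
  - by move=> _; exists [:: 1; 7; 4; 3; 6]; vm_compute.
  - by move=> _; exists [:: 1; 7; 5; 3; 4]; vm_compute.
  - by move=> _; exists [:: 1; 7; 5; 3; 4]; vm_compute.
  - by move=> _; exists [:: 1; 0; 6; 3; 7]; vm_compute.
  - by move=> _; exists [:: 1; 0; 6; 3; 7]; vm_compute.
  - by move=> _; exists [:: 1; 0; 4; 3; 7]; vm_compute.
  - by move=> _; exists [:: 1; 0; 4; 3; 7]; vm_compute.
  - by move=> _; exists [:: 1; 0; 4; 7; 6]; vm_compute.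
  - by move=> _; exists [:: 1; 0; 4; 7; 6]; vm_compute.
  - by move=> _; exists [:: 0; 4; 3; 2; 7]; vm_compute.
  - by move=> _; exists [:: 0; 4; 3; 2; 7]; vm_compute.
  - by move=> _; exists [:: 0; 1; 2; 3; 7]; vm_compute.
  - by move=> _; exists [:: 0; 1; 2; 3; 7]; vm_compute.
  - by move=> _; exists [:: 0; 1; 2; 3; 7]; vm_compute.
  - by move=> _; exists [:: 0; 1; 2; 3; 7]; vm_compute.
  - by move=> _; exists [:: 1; 2; 3; 4; 7]; vm_compute.
  - by move=> _; exists [:: 1; 2; 3; 4; 7]; vm_compute.
  - by move=> _; exists [:: 1; 0; 5; 7; 4]; vm_compute.
  - by move=> _; exists [:: 1; 0; 5; 7; 4]; vm_compute.
Qed.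

Lemma bf2 (P : nat -> nat -> bool) :
  all (fun i => all (fun a => P i a) (iota 0 5)) (iota 0 5) ->
  forall i a, i < 5 -> a < 5 -> P i a.
Proof.
move=> /allP H i a Hi Ha.
have Hi' : i \in iota 0 5 by rewrite mem_iota.
have /allP := H i Hi'. apply; by rewrite mem_iota.
Qed.

Lemma bf3 (P : nat -> nat -> nat -> bool) :
  all (fun i => all (fun a => all (fun c => P i a c) (iota 0 5)) (iota 0 5)) (iota 0 5) ->
  forall i a c, i < 5 -> a < 5 -> c < 5 -> P i a c.
Proof.
move=> /allP H i a c Hi Ha Hc.
have Hi' : i \in iota 0 5 by rewrite mem_iota.
have Ha' : a \in iota 0 5 by rewrite mem_iota.
have /allP := H i Hi'. move=> /(_ a Ha') /allP.
apply; by rewrite mem_iota.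
Qed.

Lemma good_copy (T : finType) (e : rel T) (W : nat -> T) (M : nat -> nat -> bool) (h : rel 'I_5) (hn : nat -> nat -> bool) (s : seq nat) :
  (forall p q : 'I_5, h p q = hn p q) -> good hn M s ->
  (forall a c, a < 8 -> c < 8 -> e (W a) (W c) = M a c) ->
  {in [pred k | k < 8] &, injective W} -> induced_copy e h.
Proof.
move=> hh /andP[/andP[/andP[/eqP sz un] /allP al] /allP ed] hM inj.
have lt8 : forall p : 'I_5, nth 0 s p < 8.
  by move=> p; apply: al; apply: mem_nth; rewrite sz.
exists (fun p : 'I_5 => W (nth 0 s p)); split.
- move=> p q E; have := inj _ _ (lt8 p) (lt8 q) E => /eqP.
  rewrite nth_uniq ?sz // => /eqP pq; exact: val_inj.
- move=> p q; rewrite hh hM //.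
  have Hp : nat_of_ord p \in iota 0 5 by rewrite mem_iota /=.
  have Hq : nat_of_ord q \in iota 0 5 by rewrite mem_iota /=.
  have /allP := ed p Hp.
  by move=> /(_ q Hq) /eqP.
Qed.

Definition Wf (T : Type) (V : nat -> T) (y1 y2 x : T) (k : nat) :=
  if k < 5 then V k else if k == 5 then y1 else if k == 6 then y2 else x.

Lemma hM_lemma (T : Type) (e : rel T) (V : nat -> T) y1 y2 x b yy :
  symmetric e -> irreflexive e ->
  (forall a c, a < 5 -> c < 5 -> e (V a) (V c) = cycn a c) ->
  (forall a, a < 5 -> e y1 (V a) = nyn a) ->
  (forall a, a < 5 -> e y2 (V a) = nyn a) ->
  (forall a, a < 5 -> e x (V a) = nth false b a) ->
  e y1 y2 = yy -> e x y1 -> ~~ e x y2 ->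
  forall a c, a < 8 -> c < 8 -> e (Wf V y1 y2 x a) (Wf V y1 y2 x c) = Mn b yy a c.
Proof.
move=> sy irr hVV hy1 hy2 hx hyy xy1 xy2 a c.
case: a => [|[|[|[|[|[|[|[|a]]]]]]]]; case: c => [|[|[|[|[|[|[|[|c]]]]]]]] => //= _ _;
rewrite /Wf /Mn /=;
first [ by rewrite irr | by rewrite hVV | by rewrite hy1 | by rewrite hy2
      | by rewrite sy hy1 | by rewrite sy hy2 | by rewrite hx | by rewrite sy hx
      | by rewrite hyy | by rewrite sy hyy | by rewrite xy1 | by rewrite sy xy1
      | by rewrite (negbTE xy2) | by rewrite sy (negbTE xy2) ].
Qed.

Lemma inj_lemma (T : eqType) (V : nat -> T) y1 y2 x :
  (forall a c, a < 5 -> c < 5 -> V a = V c -> a = c) ->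
  (forall a, a < 5 -> V a != y1) -> (forall a, a < 5 -> V a != y2) ->
  (forall a, a < 5 -> V a != x) ->
  y1 != y2 -> x != y1 -> x != y2 -> {in [pred k | k < 8] &, injective (Wf V y1 y2 x)}.
Proof.
move=> hVV h1 h2 h3 n12 nx1 nx2 a c; rewrite !inE.
case: a => [|[|[|[|[|[|[|[|a]]]]]]]]; case: c => [|[|[|[|[|[|[|[|c]]]]]]]] => //= _ _;
rewrite /Wf /=;
first [ by []
      | by move=> E; apply: (hVV _ _ _ _ E)
      | by move=> /eqP; rewrite (negbTE (h1 _ _))
      | by move=> /eqP; rewrite (negbTE (h2 _ _))
      | by move=> /eqP; rewrite (negbTE (h3 _ _))
      | by move=> /esym/eqP; rewrite (negbTE (h1 _ _))
      | by move=> /esym/eqP; rewrite (negbTE (h2 _ _))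
      | by move=> /esym/eqP; rewrite (negbTE (h3 _ _))
      | by move=> /eqP; rewrite (negbTE n12) | by move=> /esym/eqP; rewrite (negbTE n12)
      | by move=> /eqP; rewrite (negbTE nx1) | by move=> /esym/eqP; rewrite (negbTE nx1)
      | by move=> /eqP; rewrite (negbTE nx2) | by move=> /esym/eqP; rewrite (negbTE nx2) ].
Qed.

Definition Vf (T : Type) (v : 'I_5 -> T) (i : 'I_5) (a : nat) : T := v (inord ((i + a) %% 5)).

Theorem mainTheorem7 (T : finType) (e : rel T) (v : 'I_5 -> T) :
  simple_graph e ->
  vertex_critical e 5 ->
  H_free e P5 -> H_free e chair ->
  induced_C5 e v ->
  forall (i : 'I_5) (x : T),
    ~~ S23 e v i x -> ~~ S4 e v i x -> ~~ S5 e v x ->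
    (forall y, S23 e v i y -> e x y) \/ (forall y, S23 e v i y -> ~~ e x y).
Proof.
move=> [sy irr] _ hP5 hch [vinj hC] i x n23 n4 n5.
case: (boolP [forall y, S23 e v i y ==> e x y]) => [/forallP H|].
  by left => y Sy; exact: (implyP (H y)).
rewrite negb_forall => /existsP [y2]; rewrite negb_imply => /andP [S2 nx2].
case: (boolP [forall y, S23 e v i y ==> ~~ e x y]) => [/forallP H|].
  by right => y Sy; exact: (implyP (H y)).
rewrite negb_forall => /existsP [y1]; rewrite negb_imply negbK => /andP [S1 x1].
exfalso.
have lt5 : forall a, (i + a) %% 5 < 5 by move=> a; rewrite ltn_pmod.
have hVV : forall a c, a < 5 -> c < 5 -> e (Vf v i a) (Vf v i c) = cycn a c.
  move=> a c Ha Hc; rewrite /Vf hC /shift !inordK //.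
  apply/eqP; exact: (bf3 (P := fun i a c => (((i+c)%%5 == ((i+a)%%5+1)%%5) || ((i+a)%%5 == ((i+c)%%5+1)%%5)) == cycn a c) isT (ltn_ord i) Ha Hc).
have hy : forall y, S23 e v i y -> forall a, a < 5 -> e y (Vf v i a) = nyn a.
  move=> y /andP[_ /forallP Hy] a Ha; rewrite /Vf (eqP (Hy _)) /shift !inordK //.
  apply/eqP; exact: (bf2 (P := fun i a => [|| (i+a)%%5 == (i+3)%%5, (i+a)%%5 == i | (i+a)%%5 == (i+2)%%5] == nyn a) isT (ltn_ord i) Ha).
pose b := [:: e x (Vf v i 0); e x (Vf v i 1); e x (Vf v i 2); e x (Vf v i 3); e x (Vf v i 4)].
have hx : forall a, a < 5 -> e x (Vf v i a) = nth false b a.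
  by case=> [|[|[|[|[|a]]]]].
have notV : forall y, ~~ inC v y -> forall a, Vf v i a != y.
  move=> y nC a; apply/eqP => E; case/negP: nC; apply/existsP.
  by exists (inord ((i+a)%%5)); rewrite -E.
have xnotC : ~~ inC v x.
  apply/existsP => [[j /eqP xj]].
  move: S1 S2 => /andP[_ /forallP H1] /andP[_ /forallP H2].
  move: x1 nx2; rewrite -xj (sy _ y1) (sy _ y2) (eqP (H1 j)) (eqP (H2 j)).
  by move=> ->.
have key : forall (P : 'I_5 -> bool) (q : seq bool),
    (forall a, a < 5 -> P (inord ((i+a)%%5)) = nth false q a) -> b = q -> NC_is e v x P.
  move=> P q HP bq; rewrite /NC_is xnotC /=; apply/forallP => j.
  have [a Ha ->] : exists2 a, a < 5 & j = inord ((i+a)%%5).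
    exists ((j + 5 - i) %% 5); first by rewrite ltn_pmod.
    apply: val_inj; rewrite /= inordK //.
    apply/esym/eqP; exact: (bf2 (P := fun i j => (i + (j+5-i)%%5)%%5 == j) isT (ltn_ord i) (ltn_ord j)).
  by rewrite -[v _]/(Vf v i a) hx // bq HP.
have nexcl : ~~ excl b.
  apply/negP; case/orP => [/orP[]|] /eqP bq.
  - case/negP: n23; apply: (key _ _ _ bq) => a Ha; rewrite /shift !inordK //.
    apply/eqP; exact: (bf2 (P := fun i a => [|| (i+a)%%5 == (i+3)%%5, (i+a)%%5 == i | (i+a)%%5 == (i+2)%%5] == nth false [:: true; false; true; true; false] a) isT (ltn_ord i) Ha).
  - case/negP: n4; apply: (key _ _ _ bq) => a Ha; rewrite /shift !inordK //.
    apply/eqP; exact: (bf2 (P := fun i a => [|| (i+a)%%5 == (i+3)%%5, (i+a)%%5 == (i+4)%%5, (i+a)%%5 == (i+1)%%5 | (i+a)%%5 == (i+2)%%5] == nth false [:: false; true; true; true; true] a) isT (ltn_ord i) Ha).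
  - case/negP: n5; apply: (key _ _ _ bq) => a Ha.
    by move: Ha; case: a => [|[|[|[|[|a]]]]].
have [s hs] := table (e y1 y2) nexcl.
have hM := hM_lemma sy irr hVV (hy _ S1) (hy _ S2) hx (erefl (e y1 y2)) x1 nx2.
have hinj : {in [pred k | k < 8] &, injective (Wf (Vf v i) y1 y2 x)}.
  apply: inj_lemma.
  - move=> a c Ha Hc /vinj /(congr1 val); rewrite /= !inordK // => /eqP E.
    apply/eqP; exact: (implyP (bf3 (P := fun i a c => ((i+a)%%5 == (i+c)%%5) ==> (a == c)) isT (ltn_ord i) Ha Hc) E).
  - move=> a _; apply: notV; by case/andP: S1.
  - move=> a _; apply: notV; by case/andP: S2.
  - by move=> a _; apply: notV.
  - by apply/eqP => E; move: nx2; rewrite -E x1.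
  - by apply/eqP => E; move: x1; rewrite E irr.
  - by apply/eqP => E; move: n23; rewrite E S2.
case/orP: hs => hs.
- by apply: hP5; apply: (good_copy _ hs hM hinj).
- by apply: hch; apply: (good_copy _ hs hM hinj).
Qed.
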